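(* Let $P \in S$ have degree $n \geq 1$ in $x$, and suppose that the degree in $x$ of every nonzero element of $C_S(P)$ is divisible by $n$. Then $C_S(P) = K[P]$.
   Context: Standing conventions: $K$ is a field, $R = K[y]$, $\sigma$ is a $K$-algebra endomorphism of $R$ with $\deg_y(\sigma(y)) > 1$, and $\delta$ is a $K$-linear $\sigma$-derivation of $R$ ($\delta(ab) = \sigma(a)\delta(b) + \delta(a)b$). $S = R[x;\sigma,\delta]$ is the Ore extension (polynomials $\sum r_i x^i$, $r_i\in R$, with $xr = \sigma(r)x + \delta(r)$). $C_S(P)$ is the centralizer of $P$ in $S$, and $K[P] = \{\sum_i c_i P^i : c_i \in K\}$. *)

(* Defs.v *)
From HB Require Import structures.
From mathcomp Require Import all_boot all_order all_algebra.
Set Implicit Arguments. Unset Strict Implicit. Unset Printing Implicit Defensive.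
Import GRing.Theory.
Local Open Scope ring_scope.

(* Elements of the Ore extension S = R[x; sigma, delta], R = K[y], are
   represented by their (unique) left normal form  sum_i r_i x^i, i.e. as
   polynomials in x with coefficients in R = {poly K}: type {poly {poly K}}. *)

(* left multiplication by x:  x * (sum r_i x^i) = sum (sigma r_i x^{i+1} + delta r_i x^i) *)
Definition ore_xmul (K : fieldType) (sigma delta : {poly K} -> {poly K})
  (q : {poly {poly K}}) : {poly {poly K}} :=
  'X * map_poly sigma q + map_poly delta q.

Definition ore_mul (K : fieldType) (sigma delta : {poly K} -> {poly K})
  (p q : {poly {poly K}}) : {poly {poly K}} :=
  \sum_(i < size p) (p`_i)%:P * iter i (ore_xmul sigma delta) q.

Definition ore_exp (K : fieldType) (sigma delta : {poly K} -> {poly K})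
  (p : {poly {poly K}}) (n : nat) : {poly {poly K}} :=
  iter n (ore_mul sigma delta p) 1.

Definition xdeg (K : fieldType) (p : {poly {poly K}}) : nat := (size p).-1.

Definition in_centralizer (K : fieldType) (sigma delta : {poly K} -> {poly K})
  (P Q : {poly {poly K}}) : Prop :=
  ore_mul sigma delta P Q = ore_mul sigma delta Q P.

Definition in_KP (K : fieldType) (sigma delta : {poly K} -> {poly K})
  (P Q : {poly {poly K}}) : Prop :=
  exists c : seq K,
    Q = \sum_(i < size c) ((c`_i)%:P)%:P * ore_exp sigma delta P i.

Definition is_K_alg_endo (K : fieldType) (sigma : {poly K} -> {poly K}) : Prop :=
  [/\ forall a b, sigma (a + b) = sigma a + sigma b,
      forall a b, sigma (a * b) = sigma a * sigma b,
      sigma 1 = 1 &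
      forall (c : K) a, sigma (c *: a) = c *: sigma a].

Definition is_sigma_derivation (K : fieldType) (sigma delta : {poly K} -> {poly K}) : Prop :=
  [/\ forall a b, delta (a + b) = delta a + delta b,
      forall (c : K) a, delta (c *: a) = c *: delta a &
      forall a b, delta (a * b) = sigma a * delta b + delta a * b].

(* Main.v *)
Require Import Defs.
From HB Require Import structures.
From mathcomp Require Import all_boot all_order all_algebra.
Set Implicit Arguments. Unset Strict Implicit. Unset Printing Implicit Defensive.
Import GRing.Theory.
Local Open Scope ring_scope.

Section Ore.
Variable K : fieldType.
Variables sigma delta : {poly K} -> {poly K}.
Hypothesis Hs : is_K_alg_endo sigma.
Hypothesis Hd : is_sigma_derivation sigma delta.

Lemma sD a b : sigma (a + b) = sigma a + sigma b. Proof. by case: Hs. Qed.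
Lemma sM a b : sigma (a * b) = sigma a * sigma b. Proof. by case: Hs. Qed.
Lemma s1 : sigma 1 = 1. Proof. by case: Hs. Qed.
Lemma sZ c a : sigma (c *: a) = c *: sigma a. Proof. by case: Hs. Qed.
Lemma s0 : sigma 0 = 0.
Proof. by apply: (@addrI _ (sigma 0)); rewrite -sD !addr0. Qed.
Lemma sC c : sigma c%:P = c%:P.
Proof. by rewrite -alg_polyC sZ s1. Qed.
Lemma dD a b : delta (a + b) = delta a + delta b. Proof. by case: Hd. Qed.
Lemma dZ c a : delta (c *: a) = c *: delta a. Proof. by case: Hd. Qed.
Lemma dM a b : delta (a * b) = sigma a * delta b + delta a * b. Proof. by case: Hd. Qed.
Lemma d0 : delta 0 = 0.
Proof. by apply: (@addrI _ (delta 0)); rewrite -dD !addr0. Qed.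
Lemma d1 : delta 1 = 0.
Proof.
have := dM 1 1; rewrite !mulr1 s1 mul1r => h.
by apply: (@addrI _ (delta 1)); rewrite addr0 -h.
Qed.
Lemma dC c : delta c%:P = 0.
Proof. by rewrite -alg_polyC dZ d1 scaler0. Qed.

Lemma s_comp a : sigma a = a \Po sigma 'X.
Proof.
elim/poly_ind: a => [|a c IH]; first by rewrite s0 comp_poly0.
by rewrite sD sM IH comp_polyD comp_polyM comp_polyX sC comp_polyC.
Qed.

Local Notation xm := (ore_xmul sigma delta).
Local Notation om := (ore_mul sigma delta).

Lemma coef_xm q i : (xm q)`_i =
  (if i == 0%N then 0 else sigma q`_i.-1) + delta q`_i.
Proof. by rewrite /ore_xmul coefD coefXM !coef_map_id0 ?s0 ?d0. Qed.

Lemma xmD a b : xm (a + b) = xm a + xm b.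
Proof.
apply/polyP=> i; rewrite coefD !coef_xm !coefD sD dD.
case: (i == 0%N); rewrite ?addr0 ?add0r; last by rewrite -!addrA; congr (_ + _); rewrite addrCA.
by [].
Qed.
Lemma xm0 : xm 0 = 0.
Proof. by apply/polyP=> i; rewrite coef_xm !coef0 s0 d0; case: (i == 0%N); rewrite addr0. Qed.

Lemma xmCM r q : xm (r%:P * q) = (sigma r)%:P * xm q + (delta r)%:P * q.
Proof.
apply/polyP=> i; rewrite coef_xm [RHS]coefD !coefCM coef_xm dM mulrDr.
case: (i == 0%N); rewrite ?mulr0 ?add0r // sM.
by rewrite -!addrA.
Qed.

Lemma xmCC c q : xm ((c%:P)%:P * q) = (c%:P)%:P * xm q.
Proof. by rewrite xmCM sC dC mul0r addr0. Qed.

Lemma xm1 : xm 1 = 'X.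
Proof.
apply/polyP=> i; rewrite coef_xm !coefC coefX.
case: i => [|[|i]] /=; rewrite ?s1 ?d1 ?s0 ?d0 ?addr0 //.
Qed.

Lemma itD i a b : iter i xm (a + b) = iter i xm a + iter i xm b.
Proof. by elim: i => //= i ->; rewrite xmD. Qed.
Lemma it0 i : iter i xm 0 = 0.
Proof. by elim: i => //= i ->; rewrite xm0. Qed.
Lemma itCC i c q : iter i xm ((c%:P)%:P * q) = (c%:P)%:P * iter i xm q.
Proof. by elim: i => //= i ->; rewrite xmCC. Qed.
Lemma it1 i : iter i xm 1 = 'X^i.
Proof.
elim: i => //= i ->; apply/polyP=> j; rewrite coef_xm !coefXn.
have hs (b : bool) : sigma b%:R = b%:R by case: b; rewrite /= ?s0 ?s1.
have hd (b : bool) : delta b%:R = 0 by case: b; rewrite /= ?d0 ?d1.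
by rewrite hd addr0; case: j => [|j] //=; rewrite hs.
Qed.

Lemma sum_widen (V : nmodType) (F : nat -> V) N M : (N <= M)%N ->
  (forall i, (N <= i)%N -> F i = 0) -> \sum_(i < N) F i = \sum_(i < M) F i.
Proof.
move=> NM F0; rewrite -!(big_mkord xpredT) (big_cat_nat (leq0n N) NM) /=.
rewrite [X in _ + X]big1_seq ?addr0 // => i /andP[_].
by rewrite mem_index_iota => /andP[] /F0.
Qed.

Lemma om_w N (p q : {poly {poly K}}) : (size p <= N)%N ->
  om p q = \sum_(i < N) (p`_i)%:P * iter i xm q.
Proof.
move=> hN; rewrite /ore_mul (@sum_widen _ (fun i => (p`_i)%:P * iter i xm q) _ _ hN) //.
by move=> i hi; rewrite nth_default // mul0r.
Qed.

Lemma omDl (p p' q : {poly {poly K}}) : om (p + p') q = om p q + om p' q.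
Proof.
set N := maxn (size p) (size p').
rewrite (@om_w N) ?(leq_trans (size_polyD _ _)) // (@om_w N p) ?leq_maxl //.
rewrite (@om_w N p') ?leq_maxr // -big_split /=; apply: eq_bigr => i _.
by rewrite coefD polyCD mulrDl.
Qed.

Lemma omCl r (p q : {poly {poly K}}) : om (r%:P * p) q = r%:P * om p q.
Proof.
rewrite (@om_w (size p)); last by rewrite mul_polyC size_scale_leq.
rewrite /ore_mul mulr_sumr; apply: eq_bigr => i _.
by rewrite coefCM polyCM mulrA.
Qed.

Lemma om0l (q : {poly {poly K}}) : om 0 q = 0.
Proof. by rewrite /ore_mul size_poly0 big_ord0. Qed.

Lemma omDr (p q q' : {poly {poly K}}) : om p (q + q') = om p q + om p q'.
Proof. by rewrite /ore_mul -big_split /=; apply: eq_bigr => i _; rewrite itD mulrDr. Qed.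

Lemma om0r (p : {poly {poly K}}) : om p 0 = 0.
Proof. by rewrite /ore_mul big1 // => i _; rewrite it0 mulr0. Qed.

Lemma omCr c (p q : {poly {poly K}}) : om p ((c%:P)%:P * q) = (c%:P)%:P * om p q.
Proof.
rewrite /ore_mul mulr_sumr; apply: eq_bigr => i _.
by rewrite itCC mulrCA.
Qed.

Lemma om_suml I (r : seq I) (F : I -> {poly {poly K}}) (q : {poly {poly K}}) :
  om (\sum_(i <- r) F i) q = \sum_(i <- r) om (F i) q.
Proof. by apply: (big_morph (fun p => om p q)); [move=> x y; rewrite omDl | rewrite om0l]. Qed.

Lemma om_sumr I (r : seq I) (F : I -> {poly {poly K}}) (p : {poly {poly K}}) :
  om p (\sum_(i <- r) F i) = \sum_(i <- r) om p (F i).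
Proof. by apply: (big_morph (om p)); [move=> x y; rewrite omDr | rewrite om0r]. Qed.

Lemma xm_sum I (r : seq I) (F : I -> {poly {poly K}}) :
  xm (\sum_(i <- r) F i) = \sum_(i <- r) xm (F i).
Proof. by apply: (big_morph xm); [move=> x y; rewrite xmD | rewrite xm0]. Qed.

Lemma omXl (a b : {poly {poly K}}) : om ('X * a) b = om a (xm b).
Proof.
rewrite (@om_w (size a).+1); last first.
  have [->|a0] := eqVneq a 0; first by rewrite mulr0 size_poly0.
  by rewrite mulrC size_mulX.
rewrite big_ord_recl coefXM /= mul0r add0r /ore_mul; apply: eq_bigr => i _.
by rewrite coefXM /= add0n -iterSr iterS.
Qed.

Lemma om_map (f : {poly K} -> {poly K}) (a b : {poly {poly K}}) : f 0 = 0 ->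
  om (map_poly f a) b = \sum_(i < size a) (f a`_i)%:P * iter i xm b.
Proof.
move=> f0; rewrite (@om_w (size a)); last by rewrite /map_poly size_poly.
by apply: eq_bigr => i _; rewrite coef_map_id0.
Qed.

Lemma xm_om (a b : {poly {poly K}}) : xm (om a b) = om (xm a) b.
Proof.
rewrite {1}/ore_mul xm_sum.
rewrite [xm a]/ore_xmul omDl omXl !om_map ?s0 ?d0 // /ore_mul -big_split /=.
by apply: eq_bigr => i _; rewrite xmCM -iterSr iterS.
Qed.

Lemma it_om k (a b : {poly {poly K}}) : iter k xm (om a b) = om (iter k xm a) b.
Proof. by elim: k => //= k ->; rewrite xm_om. Qed.

Lemma omA (p q r : {poly {poly K}}) : om (om p q) r = om p (om q r).
Proof.
rewrite [om p (om q r)]/ore_mul; under eq_bigr do rewrite it_om -omCl.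
by rewrite -om_suml.
Qed.

Lemma om1l (q : {poly {poly K}}) : om 1 q = q.
Proof. by rewrite /ore_mul size_poly1 big_ord1 coef1 /= mul1r. Qed.

Lemma om1r (q : {poly {poly K}}) : om q 1 = q.
Proof.
rewrite /ore_mul; under eq_bigr do rewrite it1 mul_polyC.
by rewrite -poly_def coefK.
Qed.

Definition pw (P : {poly {poly K}}) k := iter k (om P) 1.

Lemma pw_comm (P : {poly {poly K}}) k : om (pw P k) P = om P (pw P k).
Proof.
elim: k => [|k IH]; first by rewrite /= om1l om1r.
by rewrite /= omA IH.
Qed.

Lemma KP_cent (P : {poly {poly K}}) (c : seq K) :
  om P (\sum_(i < size c) ((c`_i)%:P)%:P * pw P i) =
  om (\sum_(i < size c) ((c`_i)%:P)%:P * pw P i) P.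
Proof.
rewrite om_sumr om_suml; apply: eq_bigr => i _.
by rewrite omCr omCl pw_comm.
Qed.

Hypothesis Hdeg : (1 < (size (sigma 'X)).-1)%N.

Lemma sX_size : (1 < size (sigma 'X))%N.
Proof. by apply: leq_trans Hdeg _; rewrite leq_pred. Qed.

Lemma s_neq0 (a : {poly K}) : a != 0 -> sigma a != 0.
Proof. by rewrite s_comp comp_poly_eq0 // sX_size. Qed.

Lemma its_neq0 n (a : {poly K}) : a != 0 -> iter n sigma a != 0.
Proof. by elim: n => //= n IH /IH /s_neq0. Qed.

Lemma its_comp n a : iter n sigma a = a \Po iter n sigma 'X.
Proof.
elim: n => [|n IH] /=; first by rewrite comp_polyXr.
by rewrite IH s_comp [in RHS]s_comp comp_polyA.
Qed.

Lemma its_size n : (size (iter n sigma 'X)).-1 = ((size (sigma 'X)).-1 ^ n)%N.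
Proof.
elim: n => [|n IH] /=; first by rewrite size_polyX.
by rewrite s_comp size_comp_poly IH expnS mulnC.
Qed.

Lemma its_M n a b : iter n sigma (a * b) = iter n sigma a * iter n sigma b.
Proof. by elim: n => //= n ->; rewrite sM. Qed.

Lemma xm_lead (z : {poly {poly K}}) : z != 0 ->
  size (xm z) = (size z).+1 /\ lead_coef (xm z) = sigma (lead_coef z).
Proof.
move=> z0.
have ls : sigma (lead_coef z) != 0 by apply: s_neq0; rewrite lead_coef_eq0.
have sm : size (map_poly sigma z) = size z by rewrite size_map_poly_id0.
have m0 : map_poly sigma z != 0 by rewrite -size_poly_gt0 sm size_poly_gt0.
have sd : (size (map_poly delta z) < size ('X * map_poly sigma z)%R)%N.
  by rewrite mulrC size_mulX // sm ltnS /map_poly size_poly.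
rewrite /ore_xmul size_polyDl // lead_coefDl // mulrC size_mulX // sm.
by rewrite lead_coefMX lead_coef_map_id0 ?s0.
Qed.

Lemma it_lead i (z : {poly {poly K}}) : z != 0 ->
  size (iter i xm z) = (size z + i)%N /\
  lead_coef (iter i xm z) = iter i sigma (lead_coef z).
Proof.
move=> z0; elim: i => [|i [IHs IHl]] /=; first by rewrite addn0.
have nz : iter i xm z != 0 by rewrite -size_poly_gt0 IHs addn_gt0 size_poly_gt0 z0.
by have [-> ->] := xm_lead nz; rewrite IHs IHl addnS.
Qed.

Lemma om_lead (A B : {poly {poly K}}) : A != 0 -> B != 0 ->
  size (om A B) = (size A + size B).-1 /\
  lead_coef (om A B) = lead_coef A * iter (size A).-1 sigma (lead_coef B).
Proof.
move=> A0 B0.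
have sA : size A = (size A).-1.+1 by rewrite prednK // size_poly_gt0.
set n := (size A).-1 in sA *.
have [st lt] := it_lead n B0.
have an : A`_n != 0 by rewrite /n -lead_coefE lead_coef_eq0.
have sT : size ((A`_n)%:P * iter n xm B)%R = (size B + n)%N by rewrite size_Cmul.
have sS : (size (\sum_(i < n) (A`_(widen_ord (leqnSn n) i))%:P *
          iter (widen_ord (leqnSn n) i) xm B)%R < size B + n)%N.
  have bn : (0 < size B + n)%N by rewrite addn_gt0 size_poly_gt0 B0.
  rewrite -(prednK bn) ltnS.
  apply: (big_ind (fun x : {poly {poly K}} => size x <= (size B + n).-1)%N) => //.
  - by rewrite size_poly0.
  - by move=> x y hx hy; rewrite (leq_trans (size_polyD _ _)) // geq_max hx hy.
  move=> i _; rewrite mul_polyC (leq_trans (size_scale_leq _ _)) //=.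
  have [s1' _] := it_lead i B0.
  by rewrite s1' -ltnS (prednK bn) ltn_add2l.
rewrite /ore_mul sA big_ord_recr /= addrC size_polyDl ?sT // lead_coefDl ?sT //.
split; first by rewrite addnC.
by rewrite mul_polyC lead_coefZ lt /n lead_coefE.
Qed.

Lemma tau_const n (hn : (0 < n)%N) (a : {poly K}) : a != 0 ->
  (size (iter n sigma a) <= size a)%N -> exists c : K, c != 0 /\ a = c%:P.
Proof.
move=> a0 hs.
have hD : (1 < (size (iter n sigma 'X)).-1)%N.
  rewrite its_size; case: n hn {hs} => // n _; rewrite expnS.
  apply: (ssrnat.leq_trans Hdeg); apply: leq_pmulr; rewrite expn_gt0.
  by rewrite (ltnW Hdeg).
have := size_comp_poly a (iter n sigma 'X); rewrite -its_comp => e.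
have sa : (0 < size a)%N by rewrite size_poly_gt0.
have st : (0 < size (iter n sigma a))%N by rewrite size_poly_gt0 its_neq0.
have : (size a).-1 = 0%N.
  move: e hs hD sa st; set x := (size a).-1; set D := (size (iter n sigma 'X)).-1.
  set y := size (iter n sigma a); move=> e hs hD sa st.
  have ex : size a = x.+1 by rewrite /x prednK.
  have ey : y = (x * D).+1 by rewrite -e prednK.
  rewrite ex ey ltnS in hs.
  case: (posnP x) => // xp.
  by move: hs; rewrite -{2}(muln1 x) leq_pmul2l // leqNgt hD.
move=> h; have /size_poly1P [c c0 ->] : size a == 1%N.
  by rewrite -(prednK sa) h.
by exists c.
Qed.


Lemma key n (hn : (0 < n)%N) (p w z1 z2 : {poly K}) : p != 0 -> z1 != 0 -> z2 != 0 ->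
  p * iter n sigma z1 = z1 * w -> p * iter n sigma z2 = z2 * w ->
  exists c : K, z1 = c%:P * z2.
Proof.
move=> p0 z10 z20 h1 h2.
have e : iter n sigma z1 * z2 = iter n sigma z2 * z1.
  by apply: (mulfI p0); rewrite !mulrA h1 h2 mulrAC [RHS]mulrAC (mulrC z2).
have ha : z1 = (z1 %/ gcdp z1 z2) * gcdp z1 z2 by rewrite divpK // dvdp_gcdl.
have hb : z2 = (z2 %/ gcdp z1 z2) * gcdp z1 z2 by rewrite divpK // dvdp_gcdr.
have g0 : gcdp z1 z2 != 0 by rewrite gcdp_eq0 negb_and z10.
have cop : coprimep (z1 %/ gcdp z1 z2) (z2 %/ gcdp z1 z2).
  by apply: coprimep_div_gcd; rewrite z10.
move: ha hb cop; move: (z1 %/ gcdp z1 z2) => a; move: (z2 %/ gcdp z1 z2) => b.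
move: g0; move: (gcdp z1 z2) => g g0 ha hb cop.
have a0 : a != 0 by move: z10; rewrite ha mulf_eq0 negb_or => /andP[].
have b0 : b != 0 by move: z20; rewrite hb mulf_eq0 negb_or => /andP[].
have tcop : coprimep (iter n sigma a) (iter n sigma b).
  by rewrite (its_comp n a) (its_comp n b); apply: coprimep_comp_poly.
have e2 : iter n sigma a * b = iter n sigma b * a.
  have tg : iter n sigma g * g != 0 by rewrite mulf_neq0 ?its_neq0.
  by apply: (mulIf tg); move: e; rewrite ha hb !its_M => e; rewrite mulrACA e mulrACA.
have da : iter n sigma a %| a by rewrite -(Gauss_dvdpr a tcop) -e2 dvdp_mulIl.
have tcop' : coprimep (iter n sigma b) (iter n sigma a) by rewrite coprimep_sym.
have db : iter n sigma b %| b by rewrite -(Gauss_dvdpr b tcop') e2 dvdp_mulIl.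
have [ca [ca0 ea]] := tau_const hn a0 (dvdp_leq a0 da).
have [cb [cb0 eb]] := tau_const hn b0 (dvdp_leq b0 db).
exists (ca / cb); rewrite ha hb ea eb mulrA -polyCM divfK //.
Qed.

Lemma pw_size (P : {poly {poly K}}) : P != 0 -> forall k,
  pw P k != 0 /\ size (pw P k) = ((size P).-1 * k).+1.
Proof.
move=> P0; elim=> [|k [nz sz]]; first by rewrite /= oner_neq0 size_poly1 muln0.
have [s _] := om_lead P0 nz.
have sP : (0 < size P)%N by rewrite size_poly_gt0.
have ss : size (pw P k.+1) = ((size P).-1 * k.+1).+1.
  by rewrite /= s sz -(prednK sP) /= addnS mulnS.
by rewrite -size_poly_gt0 ss.
Qed.

Definition KPf (P Q : {poly {poly K}}) := exists N (f : nat -> K),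
  Q = \sum_(i < N) ((f i)%:P)%:P * pw P i.

Lemma KPf_KP P Q : KPf P Q -> in_KP sigma delta P Q.
Proof.
move=> [N [f ->]]; exists (mkseq f N); rewrite size_mkseq.
by apply: eq_bigr => i _; rewrite nth_mkseq.
Qed.

Lemma KPf_add P Z c k : KPf P Z -> KPf P (Z + ((c%:P)%:P * pw P k)).
Proof.
move=> [N [f ->]].
set M := maxn N k.+1.
exists M, (fun i => (if (i < N)%N then f i else 0) + (if i == k then c else 0)).
under [in RHS]eq_bigr do rewrite !polyCD mulrDl.
rewrite big_split /=; congr (_ + _).
  have := @sum_widen _ (fun i => (((if (i < N)%N then f i else 0))%:P)%:P * pw P i) N M (leq_maxl _ _).
  move=> /= <-; last by move=> i hi; rewrite ltnNge hi /= mul0r.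
  by apply: eq_bigr => i _; rewrite ltn_ord.
have := @sum_widen _ (fun i => (((if i == k then c else 0))%:P)%:P * pw P i) k.+1 M (leq_maxr _ _).
move=> /= <-; last by move=> i hi; rewrite gtn_eqF // mul0r.
rewrite big_ord_recr /= eqxx big1 ?add0r // => i _.
by rewrite (ltn_eqF (ltn_ord i)) mul0r.
Qed.

Lemma cent_lin P Q R c : in_centralizer sigma delta P Q -> in_centralizer sigma delta P R ->
  in_centralizer sigma delta P (Q + (c%:P)%:P * R).
Proof.
rewrite /in_centralizer => hQ hR.
by rewrite omDr omDl omCr omCl hQ hR.
Qed.

Lemma size_top (p : {poly {poly K}}) m : (size p <= m.+1)%N -> p`_m = 0 -> (size p <= m)%N.
Proof.
rewrite leq_eqVlt => /orP[/eqP sp|//] pm.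
have : lead_coef p = 0 by rewrite lead_coefE sp.
by move/eqP; rewrite lead_coef_eq0 => /eqP p0; move: sp; rewrite p0 size_poly0.
Qed.

Lemma cent_KPf (P : {poly {poly K}}) : (1 <= xdeg P)%N ->
  (forall Q, Q != 0 -> in_centralizer sigma delta P Q -> (xdeg P %| xdeg Q)%N) ->
  forall Q, in_centralizer sigma delta P Q -> KPf P Q.
Proof.
move=> HP Hdiv.
have P0 : P != 0 by rewrite -size_poly_gt0; move: HP; rewrite /xdeg; case: (size P).
have hn : (0 < (size P).-1)%N by [].
have K0 : KPf P 0 by exists 0%N, (fun _ => 0); rewrite big_ord0.
move=> Q; move: {2}(size Q) (leqnn (size Q)) => s; elim: s Q => [|s IH] Q hs hQ.
  by move: hs; rewrite leqn0 size_poly_eq0 => /eqP ->.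
have [->|Q0] := eqVneq Q 0; first by [].
have hm : size Q = (size Q).-1.+1 by rewrite prednK // size_poly_gt0.
set m := (size Q).-1 in hm.
have dv : ((size P).-1 %| m)%N by exact: (Hdiv Q Q0 hQ).
set k := (m %/ (size P).-1)%N.
have mk : m = ((size P).-1 * k)%N by rewrite /k mulnC divnK.
have [Pk0 sPk] := pw_size P0 k.
rewrite -mk in sPk.
have [_ l1] := om_lead P0 Q0; have [_ l2] := om_lead Q0 P0.
have e1 : lead_coef P * iter (size P).-1 sigma (lead_coef Q) =
          lead_coef Q * iter m sigma (lead_coef P) by rewrite -l1 -l2 hQ.
have [_ l3] := om_lead P0 Pk0; have [_ l4] := om_lead Pk0 P0.
have e2 : lead_coef P * iter (size P).-1 sigma (lead_coef (pw P k)) =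
          lead_coef (pw P k) * iter m sigma (lead_coef P).
  by rewrite -l3 -pw_comm l4 sPk.
have lP : lead_coef P != 0 by rewrite lead_coef_eq0.
have lQ : lead_coef Q != 0 by rewrite lead_coef_eq0.
have lK : lead_coef (pw P k) != 0 by rewrite lead_coef_eq0.
have [c ec] := key hn lP lQ lK e1 e2.
have hQ' : in_centralizer sigma delta P (Q + ((- c)%:P)%:P * pw P k).
  apply: cent_lin => //; rewrite /in_centralizer; exact: esym (pw_comm P k).
have sQ' : (size (Q + ((- c)%:P)%:P * pw P k)%R <= s)%N.
  apply: (@leq_trans m); last by rewrite -ltnS -hm.
  apply: size_top.
    rewrite (leq_trans (size_polyD _ _)) // geq_max -hm leqnn /=.
    by rewrite mul_polyC (leq_trans (size_scale_leq _ _)) // sPk hm.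
  rewrite coefD coefCM.
  have -> : Q`_m = lead_coef Q by rewrite lead_coefE.
  have -> : (pw P k)`_m = lead_coef (pw P k) by rewrite lead_coefE sPk.
  by rewrite ec !polyCN mulNr addrN.
have := KPf_add c k (IH _ sQ' hQ').
by rewrite !polyCN mulNr addrNK.
Qed.
End Ore.

Unset Implicit Arguments. Set Strict Implicit.

Theorem lemma5p2 (K : fieldType) (sigma delta : {poly K} -> {poly K})
  (Hsigma : is_K_alg_endo sigma)
  (Hdeg : (1 < (size (sigma 'X)).-1)%N)
  (Hdelta : is_sigma_derivation sigma delta)
  (P : {poly {poly K}})
  (HP : (1 <= xdeg P)%N)
  (Hdiv : forall Q : {poly {poly K}}, Q != 0 ->
            in_centralizer sigma delta P Q -> (xdeg P %| xdeg Q)%N) :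
  forall Q : {poly {poly K}},
    in_centralizer sigma delta P Q <-> in_KP sigma delta P Q.
Proof.
move=> Q; split.
  move=> hQ; apply: KPf_KP; exact: (cent_KPf Hsigma Hdelta Hdeg HP Hdiv hQ).
move=> [c ->]; rewrite /in_centralizer; exact: (KP_cent Hsigma Hdelta P c).
Qed.
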